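(* Let $G_{P,\mathcal{K}}$ be the closure under R1–R4 of a pattern $P$ with consistent background knowledge $\mathcal{K}$, and let $x\to y$ in $G_{P,\mathcal{K}}$. Then there exists a consistent DAG extension of $G_{P,\mathcal{K}}$ in which every edge that is undirected in $G_{P,\mathcal{K}}$ and incident to $x$ or $y$ is oriented out of $x$ or out of $y$, respectively.
   Context: A PDAG is a graph with directed and undirected edges and no directed cycle. The pattern of a DAG is the graph with the same skeleton in which an edge is directed iff it belongs to a v-structure (a triple $a\to c\leftarrow b$ with $a,b$ non-adjacent). A consistent DAG extension of a PDAG $G$ is a DAG with the same skeleton, the same orientation of every directed edge of $G$, and no v-structures other than those of $G$. A set $\mathcal{K}$ of orientations of undirected edges of $P$ is consistent background knowledge if some DAG with pattern $P$ contains all of them. $G_{P,\mathcal{K}}$ is obtained from $P$ by orienting the edges in $\mathcal{K}$ and then repeatedly applying until none applies: R1: if $k\to i$, $i - j$, $k,j$ non-adjacent, orient $i\to j$; R2: if $i\to k\to j$ and $i - j$, orient $i\to j$; R3: if $i - k$, $i - l$, $i - j$, $k\to j$, $l\to j$, $k,l$ non-adjacent, orient $i\to j$; R4: if $i - k$, $i - l$, $i - j$, $k\to l\to j$, $k,j$ non-adjacent, orient $i\to j$. *)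

(* Defs.v *)
(* Graphs on a finite vertex type T, encoded by a mark relation
   g : rel T:  a -> b  iff  g a b && ~~ g b a ;  a - b  iff  g a b && g b a ;
   a, b adjacent iff g a b || g b a. *)
From mathcomp Require Import all_boot.
Set Implicit Arguments. Unset Strict Implicit. Unset Printing Implicit Defensive.

Section Graphs.
Variable T : finType.
Implicit Types (g D P K : rel T).

Definition dir g a b := g a b && ~~ g b a.
Definition und g a b := g a b && g b a.
Definition adj g a b := g a b || g b a.

Definition vstruct g a c b := [&& dir g a c, dir g b c, a != b & ~~ adj g a b].

(* a DAG: a relation of directed edges without directed cycles
   (this also forces irreflexivity and asymmetry) *)
Definition dag D := forall a b, D a b -> ~~ connect D b a.

Definition pdag g := irreflexive g /\ forall a b, dir g a b -> ~~ connect (dir g) b a.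

Definition in_vstruct D a c := D a c && [exists b, [&& D b c, b != a & ~~ adj D a b]].

(* the pattern of a DAG D: same skeleton, edge directed iff in a v-structure *)
Definition pattern_of D : rel T := fun a b => adj D a b && ~~ in_vstruct D b a.

Definition is_pattern P := exists D, dag D /\ pattern_of D =2 P.

(* K (a b) means: the orientation a -> b of the undirected edge a - b of P *)
Definition consistent_bk P K :=
  (forall a b, K a b -> und P a b) /\
  exists D, [/\ dag D, pattern_of D =2 P & forall a b, K a b -> D a b].

Definition orientK P K : rel T := fun a b => P a b && ~~ K b a.

Definition orient g i j : rel T := fun a b => g a b && ~~ ((a == j) && (b == i)).

Definition R1 g i j := und g i j /\ exists k, dir g k i /\ ~~ adj g k j.
Definition R2 g i j := und g i j /\ exists k, dir g i k /\ dir g k j.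
Definition R3 g i j := und g i j /\ exists k l,
  [/\ und g i k, und g i l, dir g k j, dir g l j & (k != l) && ~~ adj g k l].
Definition R4 g i j := und g i j /\ exists k l,
  [/\ und g i k, und g i l, dir g k l & dir g l j /\ ~~ adj g k j].

Definition applicable g i j := R1 g i j \/ R2 g i j \/ R3 g i j \/ R4 g i j.

Definition meek_step g g' := exists i j, applicable g i j /\ g' =2 orient g i j.

Inductive meek_reach : rel T -> rel T -> Prop :=
| meek_refl g : meek_reach g g
| meek_next g g' g'' : meek_step g g' -> meek_reach g' g'' -> meek_reach g g''.

Definition is_closure P K G :=
  meek_reach (orientK P K) G /\ forall i j, ~ applicable G i j.

Definition consistent_ext G D :=
  [/\ dag D,
      forall a b, adj D a b = adj G a b,
      forall a b, dir G a b -> D a b &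
      forall a c b, vstruct D a c b -> vstruct G a c b].

End Graphs.

(* Main.v *)
Require Import Defs.
From mathcomp Require Import all_boot.
From Stdlib Require Import Classical.
Set Implicit Arguments. Unset Strict Implicit. Unset Printing Implicit Defensive.

Section Core.
Variable T : finType.
Variable G : rel T.
Hypothesis Hirr : forall a, G a a = false.
Hypothesis Hcl : forall i j, ~ applicable G i j.

Lemma adjC a b : adj G a b = adj G b a.
Proof. by rewrite /adj orbC. Qed.
Lemma undC a b : und G a b = und G b a.
Proof. by rewrite /und andbC. Qed.
Lemma und_neq a b : und G a b -> a != b.
Proof. by rewrite /und; case: eqP => // ->; rewrite Hirr. Qed.
Lemma dir_neq a b : dir G a b -> a != b.
Proof. by rewrite /dir; case: eqP => // ->; rewrite Hirr. Qed.
Lemma und_adj a b : und G a b -> adj G a b.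
Proof. by rewrite /und /adj => /andP[->]. Qed.
Lemma dir_adj a b : dir G a b -> adj G a b.
Proof. by rewrite /dir /adj => /andP[->]. Qed.
Lemma und_dir a b : und G a b -> dir G a b = false.
Proof. by rewrite /und /dir => /andP[_ ->]; rewrite andbF. Qed.
Lemma und_dir' a b : und G a b -> dir G b a = false.
Proof. by rewrite /und /dir => /andP[-> _]; rewrite andbF. Qed.
Lemma dir_asym a b : dir G a b -> dir G b a = false.
Proof. by rewrite /dir => /andP[-> _]; rewrite andbF. Qed.
Lemma adj_cases a b : adj G a b -> [\/ dir G a b, dir G b a | und G a b].
Proof.
rewrite /adj /dir /und; case: (G a b); case: (G b a) => //= _.
- by constructor 3.
- by constructor 1.
- by constructor 2.
Qed.

Lemma noR1 i j k : und G i j -> dir G k i -> adj G k j.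
Proof.
move=> U D; apply/negPn/negP => nA; apply: (@Hcl i j); left; split=> //.
by exists k; split.
Qed.
Lemma noR2 i j k : und G i j -> dir G i k -> dir G k j -> False.
Proof. move=> U D1 D2; apply: (@Hcl i j); right; left; split=> //; by exists k. Qed.
Lemma noR3 i j k l : und G i j -> und G i k -> und G i l -> dir G k j ->
  dir G l j -> k != l -> adj G k l.
Proof.
move=> U Uk Ul Dk Dl nkl; apply/negPn/negP => nA; apply: (@Hcl i j).
right; right; left; split=> //; exists k, l; split=> //.
by rewrite nkl nA.
Qed.
Lemma noR4 i j k l : und G i j -> und G i k -> und G i l -> dir G k l ->
  dir G l j -> adj G k j.
Proof.
move=> U Uk Ul Dk Dl; apply/negPn/negP => nA; apply: (@Hcl i j).
by right; right; right; split=> //; exists k, l; split.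
Qed.

Definition vsink (S : {set T}) v :=
  [/\ v \in S, (forall z, z \in S -> ~~ dir G v z) &
      (forall a b, a \in S -> b \in S -> und G a v -> und G b v -> a != b -> adj G a b)].

Definition vorder (S : {set T}) (r : T -> nat) :=
  [/\ {in S &, injective r},
      (forall a b, a \in S -> b \in S -> dir G a b -> r a < r b) &
      (forall a b c, a \in S -> b \in S -> c \in S -> und G a c -> und G b c ->
          a != b -> ~~ adj G a b -> ~~ ((r a < r c) && (r b < r c)))].

Lemma exists_max (S : {set T}) (r : T -> nat) z0 : z0 \in S ->
  exists2 v, v \in S & forall z, z \in S -> r z <= r v.
Proof.
move=> z0S; case: (arg_maxnP r z0S) => v vS Hv; exists v => // z zS; exact: Hv.
Qed.

Definition extr (S : {set T}) t (r : T -> nat) :=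
  fun z => if z == t then (\max_(w in S :\ t) r w).+1 else r z.

Lemma extr_lt (S : {set T}) t r z : z \in S :\ t -> r z < extr S t r t.
Proof. by move=> zS; rewrite /extr eqxx ltnS (leq_bigmax_cond _ zS). Qed.

Lemma extr_eq (S : {set T}) t r z : z != t -> extr S t r z = r z.
Proof. by rewrite /extr => /negbTE ->. Qed.

Lemma ext_order (S : {set T}) t r : vsink S t -> vorder (S :\ t) r ->
  vorder S (extr S t r).
Proof.
case=> tS tnd tcl [inj o1 o2].
have inD z : z \in S -> z != t -> z \in S :\ t by move=> zS zt; rewrite in_setD1 zt.
split.
- move=> a b aS bS.
  case: (eqVneq a t) => [->|aNt]; case: (eqVneq b t) => [->|bNt] //.
  + by rewrite (extr_eq _ _ bNt) => E; have := @extr_lt S t r b (inD _ bS bNt); rewrite E ltnn.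
  + by rewrite (extr_eq _ _ aNt) => E; have := @extr_lt S t r a (inD _ aS aNt); rewrite E ltnn.
  + by rewrite (extr_eq _ _ aNt) (extr_eq _ _ bNt); apply: inj; apply: inD.
- move=> a b aS bS D.
  case: (eqVneq a t) => [eat|aNt]; first by move: (tnd b bS); rewrite -eat D.
  rewrite (extr_eq _ _ aNt); case: (eqVneq b t) => [->|bNt].
    exact: extr_lt (inD _ aS aNt).
  by rewrite (extr_eq _ _ bNt); apply: o1 => //; apply: inD.
- move=> a b c aS bS cS Ua Ub nab nadj.
  case: (eqVneq c t) => [ect|cNt].
    by move: nadj; rewrite (tcl a b aS bS) //; rewrite -ect.
  have ac : a != c by apply: und_neq.
  have bc : b != c by apply: und_neq.
  rewrite (extr_eq _ _ cNt).
  case: (eqVneq a t) => [->|aNt].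
    by rewrite ltnNge ltnW // extr_lt // inD.
  case: (eqVneq b t) => [->|bNt].
    by rewrite andbC ltnNge ltnW // extr_lt // inD.
  rewrite (extr_eq _ _ aNt) (extr_eq _ _ bNt); apply: o2 => //; exact: inD.
Qed.

Lemma max_vsink (S : {set T}) r v : vorder S r -> v \in S ->
  (forall z, z \in S -> r z <= r v) -> vsink S v.
Proof.
case=> inj o1 o2 vS Hm; split=> //.
- move=> z zS; apply/negP => D; have := o1 _ _ vS zS D; rewrite ltnNge Hm //.
- move=> a b aS bS Ua Ub nab; apply/negPn/negP => nA.
  have lt z : z \in S -> und G z v -> r z < r v.
    move=> zS Uz; rewrite ltn_neqAle Hm // andbT; apply/eqP => E.
    by move: (und_neq Uz); rewrite (inj _ _ zS vS E) eqxx.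
  by move: (o2 a b v aS bS vS Ua Ub nab nA); rewrite !lt.
Qed.


Hypothesis Hsink : forall S : {set T}, S != set0 -> exists v, vsink S v.

Lemma card_D1 (S : {set T}) t n : t \in S -> #|S| <= n.+1 -> #|S :\ t| <= n.
Proof. by move=> tS; rewrite (cardsD1 t S) tS add1n ltnS. Qed.

Lemma order_exists (S : {set T}) : exists r, vorder S r.
Proof.
move: {2}#|S| (leqnn #|S|) => n; elim: n S => [|n IH] S HS.
  exists (fun _ => 0); move: HS; rewrite leqn0 cards_eq0 => /eqP ->.
  by split=> [a b|a b|a b c]; rewrite inE.
case: (eqVneq S set0) => [->|Sn0].
  by exists (fun _ => 0); split=> [a b|a b|a b c]; rewrite inE.
have [t tsink] := Hsink Sn0.
have [r vr] := IH (S :\ t) (card_D1 (let: And3 h _ _ := tsink in h) HS).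
by exists (extr S t r); apply: ext_order.
Qed.

Definition LOstmt (S : {set T}) (c : T) (In : {set T}) : Prop :=
  c \in S -> In \subset S -> (forall i, i \in In -> und G i c) ->
  (forall i j, i \in In -> j \in In -> i != j -> adj G i j) ->
  (forall o i, o \in S -> und G o c -> o \notin In -> i \in In -> ~~ dir G o i) ->
  exists r, [/\ vorder S r, (forall i, i \in In -> r i < r c) &
                (forall o, o \in S -> und G o c -> o \notin In -> r c < r o)].

Lemma lift1 (S : {set T}) x L : x \in S -> vsink (S :\ x) L -> ~~ adj G L x -> vsink S L.
Proof.
move=> xS [LS nd cl] nA; move: LS; rewrite in_setD1 => /andP[Lx LS]; split=> //.
- move=> z zS; case: (eqVneq z x) => [->|zx]; first by apply/negP => /dir_adj; apply/negP.
  by apply: nd; rewrite in_setD1 zx.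
- move=> a b aS bS Ua Ub nab.
  case: (eqVneq a x) => [eax|ax]; first by move: nA; rewrite adjC -eax (und_adj Ua).
  case: (eqVneq b x) => [ebx|bx]; first by move: nA; rewrite adjC -ebx (und_adj Ub).
  by apply: cl => //; rewrite in_setD1 ?ax ?bx.
Qed.

Lemma lift2 (S : {set T}) x c0 : x \in S -> vsink (S :\ x) c0 -> und G x c0 ->
  (forall o, o \in S :\ x -> und G o c0 -> adj G o x) -> vsink S c0.
Proof.
move=> xS [cS nd cl] Uxc Hnear; move: (cS); rewrite in_setD1 => /andP[cx cS']; split=> //.
- move=> z zS; case: (eqVneq z x) => [->|zx]; first by rewrite und_dir'.
  by apply: nd; rewrite in_setD1 zx.
- move=> a b aS bS Ua Ub nab.
  case: (eqVneq a x) => [eax|ax]; case: (eqVneq b x) => [ebx|bx].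
  + by move: nab; rewrite eax ebx eqxx.
  + by rewrite eax adjC; apply: Hnear => //; rewrite in_setD1 bx.
  + by rewrite ebx; apply: Hnear => //; rewrite in_setD1 ax.
  + by apply: cl => //; rewrite in_setD1 ?ax ?bx.
Qed.

Lemma trick (S : {set T}) x c0 :
  (forall c In, LOstmt (S :\ x) c In) -> x \in S -> vsink S x -> c0 \in S -> und G x c0 ->
  (forall c', c' \in S -> und G x c' -> ~~ dir G c0 c') ->
  vsink S c0 \/ exists2 s, vsink S s & (s != x) && ~~ adj G s x.
Proof.
move=> IH xS xsink c0S Uxc0 nodir.
case: (xsink) => _ xnd xcl.
have c0x : c0 != x by rewrite eq_sym und_neq.
have c0S' : c0 \in (S :\ x) by rewrite in_setD1 c0x.
set In0 := [set z in (S :\ x) | und G z c0 & adj G z x].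
have [r [vr Hin Hout]] : exists r, [/\ vorder (S :\ x) r, (forall i, i \in In0 -> r i < r c0) &
         (forall o, o \in (S :\ x) -> und G o c0 -> o \notin In0 -> r c0 < r o)].
  apply: IH => //.
  - by apply/subsetP => z; rewrite !inE => /and3P[/andP[-> ->]].
  - by move=> i; rewrite !inE => /and3P[].
  - move=> i j; rewrite !inE => /and3P[/andP[ix iS0] Ui Ai] /and3P[/andP[jx jS0] Uj Aj] nij.
    have [Dix|Dxi|Uix] := adj_cases Ai.
    + have [Djx|Dxj|Ujx] := adj_cases Aj.
      * by apply: (noR3 (i:=c0) (j:=x)) => //; rewrite undC.
      * by move: (xnd j jS0); rewrite Dxj.
      * by apply: (noR1 (i:=x) (j:=j)) => //; rewrite undC.
    + by move: (xnd i iS0); rewrite Dxi.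
    + have [Djx|Dxj|Ujx] := adj_cases Aj.
      * by rewrite adjC; apply: (noR1 (i:=x) (j:=i)) => //; rewrite undC.
      * by move: (xnd j jS0); rewrite Dxj.
      * by apply: xcl => //; rewrite undC.
  - move=> o i oS Uo oIn; rewrite !inE => /and3P[/andP[ix iS0] Ui Ai]; apply/negP => Doi.
    have nAo : ~~ adj G o x by move: oIn; rewrite inE oS Uo.
    have [Dix|Dxi|Uix] := adj_cases Ai.
    + by move: nAo; rewrite (noR4 (i:=c0) (j:=x) (k:=o) (l:=i)) // undC.
    + by move: (xnd i iS0); rewrite Dxi.
    + by move: nAo; rewrite (noR1 (i:=i) (j:=x)).
have [L LS' Lmax] := exists_max r c0S'.
have LsinkS' := max_vsink vr LS' Lmax.
have Hle : forall z, z \in (S :\ x) -> adj G z x -> r z <= r c0.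
  move=> z zS' Az; case: (eqVneq z c0) => [->//|zc].
  have zS : z \in S by move: zS'; rewrite in_setD1 => /andP[].
  have Azc : adj G z c0.
    have [Dzx|Dxz|Uzx] := adj_cases Az.
    + by apply: (noR1 (i:=x) (j:=c0)).
    + by move: (xnd z zS); rewrite Dxz.
    + by apply: xcl => //; rewrite undC.
  have [Dzc|Dcz|Uzc] := adj_cases Azc.
  + by apply: ltnW; case: vr => _ o1 _; apply: o1.
  + have [Dzx|Dxz|Uzx] := adj_cases Az.
    * by case: (noR2 (i:=c0) (j:=x) (k:=z)) => //; rewrite undC.
    * by move: (xnd z zS); rewrite Dxz.
    * by move: (nodir z zS); rewrite undC Uzx Dcz => /(_ isT).
  + by apply: ltnW; apply: Hin; rewrite inE zS' Uzc Az.
case: (boolP (adj G L x)) => [AL|nAL].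
- have ELc : L = c0.
    case: vr => inj _ _; apply: inj => //; apply/eqP; rewrite eqn_leq Hle //.
    exact: Lmax.
  left; apply: (lift2 xS) => //; first by rewrite -ELc.
  move=> o oS' Uo; apply/negPn/negP => nAo.
  have : r c0 < r o by apply: Hout => //; rewrite inE oS' Uo (negbTE nAo) andbF.
  by rewrite ltnNge -ELc Lmax.
- right; exists L; first exact: (lift1 xS).
  by rewrite nAL andbT; move: LS'; rewrite in_setD1 => /andP[].
Qed.


Lemma LO_all n : forall (S : {set T}), #|S| <= n -> forall c In, LOstmt S c In.
Proof.
elim: n => [|n IH] S HS c In.
  by move: HS; rewrite leqn0 cards_eq0 => /eqP -> ; rewrite /LOstmt inE.
move=> cS InS Uin clq noOI.
have IHD : forall x, x \in S -> forall c In, LOstmt (S :\ x) c In.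
  by move=> x xS; apply: IH; apply: card_D1.
have easy : forall s, vsink S s -> s \notin In -> s != c ->
    exists r, [/\ vorder S r, (forall i, i \in In -> r i < r c) &
                (forall o, o \in S -> und G o c -> o \notin In -> r c < r o)].
  move=> s ssink sIn sc.
  have sS : s \in S by case: ssink.
  have cS' : c \in S :\ s by rewrite in_setD1 eq_sym sc.
  have InS' : In \subset S :\ s.
    apply/subsetP => i iIn; rewrite in_setD1 (subsetP InS _ iIn) andbT.
    by apply/eqP => eis; move: sIn; rewrite -eis iIn.
  have noOI' : forall o i, o \in S :\ s -> und G o c -> o \notin In -> i \in In -> ~~ dir G o i.
    by move=> o i; rewrite in_setD1 => /andP[_ oS]; exact: noOI.
  have [r [vr Hin Hout]] := IHD s sS c In cS' InS' Uin clq noOI'.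
  exists (extr S s r); split.
  - exact: ext_order.
  - move=> i iIn; have iS' := subsetP InS' _ iIn.
    have iNs : i != s by move: iS'; rewrite in_setD1 => /andP[].
    have cNs : c != s by rewrite eq_sym.
    rewrite (extr_eq _ _ iNs) (extr_eq _ _ cNs); exact: Hin.
  - move=> o oS Uo oIn; have cNs : c != s by rewrite eq_sym.
    rewrite (extr_eq _ _ cNs).
    case: (eqVneq o s) => [->|os]; first exact: extr_lt.
    by rewrite extr_eq //; apply: Hout => //; rewrite in_setD1 os.
have [r0 vr0] := order_exists S.
case: (classic (exists s, [/\ vsink S s, s \notin In & s != c])) => [[s [h1 h2 h3]]|noE].
  exact: easy s h1 h2 h3.
have noE' : forall s, vsink S s -> s \notin In -> s = c.
  move=> s ss sIn; apply/eqP; apply/negPn/negP => sc; apply: noE; by exists s.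
case: (classic (vsink S c)) => [csink|ncsink].
  case: (classic (exists o, [/\ o \in S, und G o c & o \notin In])) => [[o [oS Uo oIn]]|noO].
    set Out := [set z in S | und G z c & z \notin In].
    have oOut : o \in Out by rewrite inE oS Uo oIn.
    have [c0 c0Out c0max] := exists_max r0 oOut.
    move: (c0Out); rewrite inE => /and3P[c0S Uc0 c0In].
    have Ucc0 : und G c c0 by rewrite undC.
    have nodirc : forall c', c' \in S -> und G c c' -> ~~ dir G c0 c'.
      move=> c' c'S Ucc'; apply/negP => Dcc'.
      case: (boolP (c' \in In)) => [c'In|c'In].
        by move: (noOI c0 c' c0S Uc0 c0In c'In); rewrite Dcc'.
      have : r0 c' <= r0 c0 by apply: c0max; rewrite inE c'S c'In andbT undC.
      by case: vr0 => _ o1 _; rewrite leqNgt o1.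
    have [c0sink|[s ssink /andP[sc nAs]]] := @trick S c c0 (IHD c cS) cS csink c0S Ucc0 nodirc.
    + by move: (und_neq Uc0); rewrite (noE' _ c0sink c0In) eqxx.
    + have sIn : s \notin In.
        by apply/negP => sIn; move: nAs; rewrite und_adj // Uin.
      by move: sc; rewrite (noE' _ ssink sIn) eqxx.
  have [r1 vr1] := order_exists (S :\ c).
  exists (extr S c r1); split.
  - exact: ext_order.
  - move=> i iIn; have iNc : i != c := und_neq (Uin i iIn).
    rewrite (extr_eq _ _ iNc); apply: extr_lt; by rewrite in_setD1 iNc (subsetP InS _ iIn).
  - by move=> o oS Uo oIn; case: noO; exists o.
have Sn0 : S != set0 by apply/set0Pn; exists c.
have [t tsink] := Hsink Sn0.
have tIn : t \in In.
  apply/negPn/negP => tIn; apply: ncsink; by rewrite -(noE' _ tsink tIn).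
have tS : t \in S by case: tsink.
have Utc := Uin t tIn.
case: (tsink) => _ tnd tcl.
set Z := [set z in S | und G z t & (z == c) || dir G c z].
have cZ : c \in Z by rewrite inE cS eqxx orTb andbT undC.
have [c0 c0Z c0max] := exists_max r0 cZ.
move: (c0Z); rewrite inE => /and3P[c0S Uc0t /orP c0c].
case: vr0 => inj0 o10 _.
have nodir : forall c', c' \in S -> und G t c' -> ~~ dir G c0 c'.
  move=> c' c'S Utc'; apply/negP => D0c'.
  have c'c : c' != c.
    apply/eqP => ec; move: D0c'; rewrite ec; case: c0c => [/eqP ->|Dcc0].
      by rewrite /dir Hirr.
    by rewrite dir_asym.
  have Ac'c : adj G c' c by apply: tcl => //; rewrite undC.
  have [Dc'c|Dcc'|Uc'c] := adj_cases Ac'c.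
  - case: c0c => [/eqP ec0|Dcc0].
      by move: Dc'c; rewrite -ec0 dir_asym.
    have := ltn_trans (o10 _ _ cS c0S Dcc0) (ltn_trans (o10 _ _ c0S c'S D0c') (o10 _ _ c'S cS Dc'c)).
    by rewrite ltnn.
  - have : r0 c' <= r0 c0 by apply: c0max; rewrite inE c'S Dcc' orbT andbT undC.
    by rewrite leqNgt o10.
  - case: c0c => [/eqP ec0|Dcc0].
      by move: D0c'; rewrite ec0 und_dir' // undC.
    by case: (noR2 (i:=c) (j:=c') (k:=c0)) => //; rewrite undC.
have Utc0 : und G t c0 by rewrite undC.
have := @trick S t c0 (IHD t tS) tS tsink c0S Utc0 nodir.
case.
- move=> c0sink; case: c0c => [/eqP ec0|Dcc0].
    by move: c0sink; rewrite ec0 => /ncsink.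
  have c0In : c0 \notin In.
    by apply/negP => c0In; move: (Uin c0 c0In); rewrite undC /und /dir in Dcc0 *; case/andP: Dcc0 => _ /negbTE ->; rewrite andbF.
  by move: (dir_neq Dcc0); rewrite (noE' _ c0sink c0In) eqxx.
- move=> [s ssink /andP[st nAs]].
  have sIn : s \notin In.
    by apply/negP => sIn; move: nAs; rewrite clq.
  have := noE' _ ssink sIn => esc.
  by move: nAs; rewrite esc adjC und_adj.
Qed.


Lemma LO (S : {set T}) c In : LOstmt S c In.
Proof. exact: (@LO_all #|S| S (leqnn _)). Qed.

Lemma sink_avoid (S : {set T}) w u : w \in S -> u \in S -> und G w u ->
  exists t, vsink S t /\ t != w.
Proof.
move=> wS uS Uwu.
have [r [vr _ Hout]] : exists r, [/\ vorder S r, (forall i, i \in set0 -> r i < r w) &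
   (forall o, o \in S -> und G o w -> o \notin set0 -> r w < r o)].
  apply: LO => //.
  - exact: sub0set.
  - by move=> i; rewrite inE.
  - by move=> i j; rewrite inE.
  - by move=> o i _ _ _; rewrite inE.
have [t tS tmax] := exists_max r uS.
exists t; split; first exact: (max_vsink vr tS tmax).
apply/eqP => etw.
have Uuw : und G u w by rewrite undC.
have u0 : u \notin set0 by rewrite inE.
have := Hout u uS Uuw u0.
by rewrite ltnNge -etw tmax.
Qed.

Lemma main_order x y : dir G x y -> forall S : {set T}, exists r, [/\ vorder S r,
   (x \in S -> forall z, z \in S -> und G x z -> r x < r z) &
   (y \in S -> forall z, z \in S -> und G y z -> r y < r z)].
Proof.
move=> Dxy S; move: {2}#|S| (leqnn #|S|) => n; elim: n S => [|n IH] S HS.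
  exists (fun _ => 0); move: HS; rewrite leqn0 cards_eq0 => /eqP ->.
  by split; [split=> [a b|a b|a b c]| |]; rewrite inE.
case: (eqVneq S set0) => [->|Sn0].
  by exists (fun _ => 0); split; [split=> [a b|a b|a b c]| |]; rewrite inE.
have [t [tsink tx ty]] : exists t, [/\ vsink S t,
    (x \in S -> (exists2 z, z \in S & und G x z) -> t != x) &
    (y \in S -> (exists2 z, z \in S & und G y z) -> t != y)].
  case: (classic (y \in S /\ exists2 z, z \in S & und G y z)) => [[yS [z zS Uyz]]|ny].
    have [t [ts tny]] := sink_avoid yS zS Uyz.
    exists t; split=> // xS _; apply/eqP => etx; case: ts => _ nd _.
    by move: (nd y yS); rewrite etx Dxy.
  case: (classic (x \in S /\ exists2 z, z \in S & und G x z)) => [[xS [z zS Uxz]]|nx].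
    have [t [ts tnx]] := sink_avoid xS zS Uxz.
    by exists t; split=> // yS ey; case: ny.
  have [t ts] := Hsink Sn0.
  by exists t; split=> // [xS ex|yS ey]; [case: nx|case: ny].
have tS : t \in S by case: tsink.
have [r [vr Hx Hy]] := IH (S :\ t) (card_D1 tS HS).
exists (extr S t r); split; first exact: ext_order.
- move=> xS z zS Uxz; have xt : x != t by rewrite eq_sym; apply: tx => //; exists z.
  have xS' : x \in S :\ t by rewrite in_setD1 xt.
  rewrite (extr_eq _ _ xt); case: (eqVneq z t) => [->|zt]; first exact: extr_lt.
  by rewrite (extr_eq _ _ zt); apply: Hx => //; rewrite in_setD1 zt.
- move=> yS z zS Uyz; have yt : y != t by rewrite eq_sym; apply: ty => //; exists z.
  have yS' : y \in S :\ t by rewrite in_setD1 yt.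
  rewrite (extr_eq _ _ yt); case: (eqVneq z t) => [->|zt]; first exact: extr_lt.
  by rewrite (extr_eq _ _ zt); apply: Hy => //; rewrite in_setD1 zt.
Qed.

Lemma final_ext x y : dir G x y -> exists D : rel T, consistent_ext G D /\
    (forall z, und G x z -> D x z) /\ (forall z, und G y z -> D y z).
Proof.
move=> Dxy; have [r [[inj o1 o2] Hx Hy]] := main_order Dxy [set: T].
pose D : rel T := fun a b => adj G a b && (r a < r b).
have Dlt a b : D a b -> r a < r b by case/andP.
have pathle : forall p u, path D u p -> r u <= r (last u p).
  elim=> [|v p IHp] u //= /andP[Duv Hp].
  exact: leq_trans (ltnW (Dlt _ _ Duv)) (IHp _ Hp).
have adjD a b : adj D a b = adj G a b.
  rewrite /adj /D (adjC b a) -/(adj G a b) -andb_orr.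
  case: (boolP (adj G a b)) => //= Aab.
  rewrite -neq_ltn; apply/negP => /eqP E.
  have ab : a = b by apply: inj; rewrite ?inE.
  by move: Aab; rewrite ab /adj Hirr.
exists D; split; last first.
  split=> z Uz; rewrite /D (und_adj Uz) /=.
  - by apply: Hx; rewrite ?inE.
  - by apply: Hy; rewrite ?inE.
split.
- move=> a b Dab; apply/negP => /connectP[p Hp Ea].
  have := pathle p b Hp; rewrite -Ea leqNgt.
  by rewrite (Dlt _ _ Dab).
- exact: adjD.
- by move=> a b Dab; rewrite /D (dir_adj Dab) o1 ?inE.
- move=> a c b /and4P[Dac Dbc nab nAab].
  rewrite adjD in nAab.
  have key u : dir D u c -> dir G u c \/ und G u c.
    case/andP => /andP[Auc ruc] _.
    have [//|Dcu|//] := adj_cases Auc; [by left| |by right].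
    by move: (o1 _ _ (in_setT c) (in_setT u) Dcu); rewrite ltnNge ltnW.
  have rac : r a < r c by case/andP: Dac => /andP[].
  have rbc : r b < r c by case/andP: Dbc => /andP[].
  rewrite /vstruct nab nAab !andbT.
  case: (key a Dac) => [Gac|Uac]; case: (key b Dbc) => [Gbc|Ubc].
  + by rewrite Gac Gbc.
  + by move: nAab; rewrite (noR1 (i:=c) (j:=b) (k:=a)) // undC.
  + by move: nAab; rewrite adjC (noR1 (i:=c) (j:=a) (k:=b)) // undC.
  + by move: (o2 a b c (in_setT a) (in_setT b) (in_setT c) Uac Ubc nab nAab); rewrite rac rbc.
Qed.

End Core.

Section Sound.
Variable T : finType.
Variables P K D0 : rel T.
Hypothesis dagD : dag D0.
Hypothesis patD : pattern_of D0 =2 P.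
Hypothesis KD : forall a b, K a b -> D0 a b.

Lemma D_irr a : D0 a a = false.
Proof. by apply/negP => Daa; move: (dagD Daa); rewrite connect0. Qed.
Lemma D_asym a b : D0 a b -> D0 b a = false.
Proof. by move=> Dab; apply/negP => Dba; move: (dagD Dab); rewrite (connect1 Dba). Qed.
Lemma D_cyc3 a b c : D0 a b -> D0 b c -> D0 c a -> False.
Proof.
move=> Dab Dbc Dca; move: (dagD Dab).
by rewrite (connect_trans (connect1 Dbc) (connect1 Dca)).
Qed.
Lemma D_adjC a b : adj D0 a b = adj D0 b a.
Proof. by rewrite /adj orbC. Qed.
Lemma D_adj_cases a b : adj D0 a b -> D0 a b \/ D0 b a.
Proof. by case/orP; [left|right]. Qed.

Lemma adjP a b : adj P a b = adj D0 a b.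
Proof.
rewrite /adj -!patD /pattern_of -/(adj D0 a b) -/(adj D0 b a) (D_adjC b a) -andb_orr.
case: (boolP (adj D0 a b)) => //= _; rewrite /in_vstruct.
case Dab: (D0 a b); case Dba: (D0 b a) => /=; rewrite ?orbT //.
by move: (D_asym Dab); rewrite Dba.
Qed.

Lemma P_noiv a b : P a b -> ~~ in_vstruct D0 b a.
Proof. by rewrite -patD /pattern_of => /andP[]. Qed.

Lemma P_of_D a b : D0 a b -> P a b.
Proof.
move=> Dab; rewrite -patD /pattern_of /adj Dab /= /in_vstruct.
by rewrite (D_asym Dab).
Qed.

Definition Inv (g : rel T) := [/\ forall a b, g a b -> P a b,
  forall a b, adj g a b = adj D0 a b & forall a b, dir g a b -> D0 a b].

Lemma sound g i j : Inv g -> applicable g i j -> D0 i j.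
Proof.
case=> gP gadj gdir Happ.
have undA a b : und g a b -> adj D0 a b by move=> /andP[gab _]; rewrite -gadj /adj gab.
have undiv a b : und g a b -> ~~ in_vstruct D0 b a.
  by move=> /andP[gab _]; apply: P_noiv; apply: gP.
have undiv' a b : und g a b -> ~~ in_vstruct D0 a b.
  by move=> /andP[_ gba]; apply: P_noiv; apply: gP.
have Uij : und g i j by case: Happ => [[]|[[]|[[]|[]]]].
case: (D_adj_cases (undA _ _ Uij)) => // Dji; exfalso.
case: Happ => [[_ [k [Dki nAkj]]]|[[_ [k [Dik Dkj]]]|[[_ [k [l [Uik Uil Dkj Dlj /andP[nkl nAkl]]]]]|[_ [k [l [Uik Uil Dkl [Dlj nAkj]]]]]]]].
- have Dki' := gdir _ _ Dki.
  have kj : k != j.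
    apply/eqP => ekj; move: Dki; rewrite ekj /dir; case/andP: Uij => -> _.
    by rewrite andbF.
  move: (undiv _ _ Uij); rewrite /in_vstruct Dji /=; apply/negP/negPn/existsP.
  exists k; rewrite Dki' kj /= D_adjC -gadj.
  exact: nAkj.
- exact: (D_cyc3 (gdir _ _ Dik) (gdir _ _ Dkj) Dji).
- have Dk := gdir _ _ Dkj; have Dl := gdir _ _ Dlj.
  have Dki : D0 k i.
    case: (D_adj_cases (undA _ _ Uik)) => // Dik.
    by case: (D_cyc3 Dik Dk Dji).
  have Dli : D0 l i.
    case: (D_adj_cases (undA _ _ Uil)) => // Dil.
    by case: (D_cyc3 Dil Dl Dji).
  move: (undiv _ _ Uik); rewrite /in_vstruct Dki /=; apply/negP/negPn/existsP.
  exists l; rewrite Dli eq_sym nkl /= -gadj.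
  exact: nAkl.
- have Dk := gdir _ _ Dkl; have Dl := gdir _ _ Dlj.
  have Dli : D0 l i.
    case: (D_adj_cases (undA _ _ Uil)) => // Dil.
    by case: (D_cyc3 Dil Dl Dji).
  have Dki : D0 k i.
    case: (D_adj_cases (undA _ _ Uik)) => // Dik.
    by case: (D_cyc3 Dik Dk Dli).
  have jk : j != k.
    apply/eqP => ejk; move: Dlj; rewrite ejk /dir; case/andP: Dkl => -> _.
    by rewrite andbF.
  move: (undiv _ _ Uik); rewrite /in_vstruct Dki /=; apply/negP/negPn/existsP.
  exists j; rewrite Dji jk /= -gadj.
  exact: nAkj.
Qed.

Lemma Inv_init : Inv (orientK P K).
Proof.
split.
- by move=> a b /andP[].
- move=> a b; rewrite -adjP /adj /orientK.
  case Kab: (K a b); case Kba: (K b a) => /=.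
  + by move: (D_asym (KD Kab)); rewrite (KD Kba).
  + by rewrite ?andbT ?andbF ?orbF (P_of_D (KD Kab)).
  + by rewrite ?andbT ?andbF (P_of_D (KD Kba)) ?orbT.
  + by rewrite !andbT.
- move=> a b; rewrite /dir /orientK.
  case Kab: (K a b); first by rewrite (KD Kab).
  rewrite andbT => /andP[/andP[Pab _] nPba].
  move: Pab nPba; rewrite -!patD /pattern_of /adj => /andP[Aab _].
  rewrite orbC Aab /= negbK => /andP[] //.
Qed.

Lemma Inv_step g g' : Inv g -> meek_step g g' -> Inv g'.
Proof.
move=> Ig [i [j [Happ E]]].
have Dij := sound Ig Happ.
case: Ig => gP gadj gdir.
have Uij : und g i j by case: Happ => [[]|[[]|[[]|[]]]].
case/andP: (Uij) => gij gji.
have ij : i != j by apply/eqP => eij; move: Dij; rewrite eij D_irr.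
split.
- by move=> a b; rewrite E /orient => /andP[/gP].
- move=> a b; rewrite -gadj /adj !E /orient.
  have ji : j != i by rewrite eq_sym.
  case: (eqVneq a j) => [->|aj]; case: (eqVneq b i) => [->|bi].
  + by rewrite ?eqxx ?(negbTE ij) gij gji /= ?orbT.
  + by rewrite ?eqxx ?(negbTE bi) ?(negbTE ji) /= ?andbF ?andbT.
  + by rewrite ?eqxx ?(negbTE aj) ?(negbTE ij) /= ?andbF ?andbT.
  + rewrite ?(negbTE aj) /= ?andbT.
    case: (eqVneq b j) => [->|bj]; case: (eqVneq a i) => [->|ai] //=; rewrite ?andbT //.
    by rewrite gij.
- move=> a b; rewrite /dir !E /orient.
  case: (eqVneq a i) => [->|ai]; case: (eqVneq b j) => [->|bj] //=;
    by rewrite andbT => /andP[/andP[gab _] nb]; apply: gdir; rewrite /dir gab.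
Qed.

Lemma Inv_reach g g' : meek_reach g g' -> Inv g -> Inv g'.
Proof.
elim=> [//|g1 g2 g3 st _ IH] I1.
by apply: IH; apply: (Inv_step I1 st).
Qed.

Lemma G_irr G : Inv G -> forall a, G a a = false.
Proof.
case=> gP gadj _ a; apply/negP => Gaa.
by move: (gadj a a); rewrite /adj Gaa D_irr.
Qed.

Lemma G_sink G : Inv G -> forall S : {set T}, S != set0 -> exists v, vsink G S v.
Proof.
case=> gP gadj gdir S /set0Pn[z0 z0S].
pose anc u := [set w | connect D0 w u].
have [v vS vmax] := exists_max (fun u => #|anc u|) z0S.
have vsinkD : forall z, z \in S -> ~~ D0 v z.
  move=> z zS; apply/negP => Dvz.
  have : #|anc v| < #|anc z|.
    apply: proper_card; apply/properP; split.
      by apply/subsetP => w; rewrite !inE => Cwv; apply: connect_trans Cwv (connect1 Dvz).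
    by exists z; rewrite !inE ?connect0 // (negbTE (dagD Dvz)).
  by rewrite ltnNge vmax.
exists v; split=> //.
- by move=> z zS; apply/negP => /gdir Dvz; move: (vsinkD z zS); rewrite Dvz.
- move=> a b aS bS Uav Ubv nab; apply/negPn/negP => nA.
  have Dav : D0 a v.
    case: (D_adj_cases (_ : adj D0 a v)) => //.
      by rewrite -gadj /adj; case/andP: Uav => ->.
    by move=> Dva; move: (vsinkD a aS); rewrite Dva.
  have Dbv : D0 b v.
    case: (D_adj_cases (_ : adj D0 b v)) => //.
      by rewrite -gadj /adj; case/andP: Ubv => ->.
    by move=> Dvb; move: (vsinkD b bS); rewrite Dvb.
  case/andP: Uav => _ Gva.
  move: (P_noiv (gP _ _ Gva)); rewrite /in_vstruct Dav /=; apply/negP/negPn/existsP.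
  by exists b; rewrite Dbv eq_sym nab /= -gadj.
Qed.

End Sound.

Unset Implicit Arguments.

Theorem mainTheorem17 (T : finType) (P K G : rel T) (x y : T) :
  is_pattern P -> consistent_bk P K -> is_closure P K G -> dir G x y ->
  exists D : rel T, consistent_ext G D /\
    (forall z, und G x z -> D x z) /\ (forall z, und G y z -> D y z).
Proof.
move=> _ [_ [D0 [dagD patD KD]]] [reach clo] Dxy.
have InvG := Inv_reach dagD patD reach (Inv_init dagD patD KD).
exact: (final_ext (G_irr dagD InvG) clo (G_sink dagD patD InvG) Dxy).
Qed.
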